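(* Let $i,p,q\ge-1$ and let $v\in C([0,1],L(\mathbb{R}^d,\mathbb{R}^n))$, $w\in C([0,1],\mathbb{R}^d)$. If $p\vee q\le i$, then \[ \|\Delta_i(\Delta_pv\,\Delta_qw)\|_\infty\lesssim 2^{-(i\vee p\vee q)-i+p+q}\|\Delta_pv\|_\infty\|\Delta_qw\|_\infty, \] except when $i=q>p$ or $i=p>q$, in which case one only has $\|\Delta_i(\Delta_pv\,\Delta_qw)\|_\infty\lesssim\|\Delta_pv\|_\infty\|\Delta_qw\|_\infty$. If $p>i$ or $q>i$, then $\Delta_i(\Delta_pv\,\Delta_qw)\equiv0$.
   Context: Index set: pairs $(p,m)$ with either $p=-1,m=0$, or $p\in\mathbb{N}=\{0,1,2,\dots\}$ and $0\le m\le 2^p$. For $p\in\mathbb{N}$, $1\le m\le 2^p$ set $t^0_{pm}=(m-1)2^{-p}$, $t^1_{pm}=(2m-1)2^{-p-1}$, $t^2_{pm}=m2^{-p}$. Rescaled Haar functions: for $p\in\mathbb{N}$, $1\le m\le 2^p$, $\chi_{pm}=2^p$ on $[t^0_{pm},t^1_{pm})$, $=-2^p$ on $[t^1_{pm},t^2_{pm})$, $=0$ elsewhere; $\chi_{00}\equiv1$; $\chi_{p0}\equiv0$ for $p\ge1$. Rescaled Schauder functions: $\varphi_{pm}(t)=\int_0^t\chi_{pm}(s)\,ds$ for $p\in\mathbb{N}$, and $\varphi_{-10}\equiv1$. For continuous $f:[0,1]\to E$ ($E$ a finite-dimensional normed space), coefficients: $f_{-10}=f(0)$, $f_{00}=f(1)-f(0)$,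 $f_{p0}=0$ for $p\ge1$, $f_{pm}=2f(t^1_{pm})-f(t^0_{pm})-f(t^2_{pm})$ for $p\in\mathbb{N},m\ge1$. Schauder blocks: $\Delta_pf=\sum_{m=0}^{2^p}f_{pm}\varphi_{pm}$ for $p\ge-1$. $\|\cdot\|_\infty$ is the sup norm; $a\vee b=\max(a,b)$; $\lesssim$ hides a constant independent of $i,p,q,v,w$. *)

(* Defs.v *)
From Stdlib Require Import Reals ZArith.
Open Scope R_scope.

Fixpoint sumR (k : nat) (f : nat -> R) : R :=
  match k with O => 0 | S k' => sumR k' f + f k' end.
Fixpoint maxR (k : nat) (f : nat -> R) : R :=
  match k with O => 0 | S k' => Rmax (maxR k' f) (f k') end.

(* vectors of R^n and linear maps R^d -> R^n (matrices, entry A j k, j<n, k<d) *)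
Definition Vec := nat -> R.
Definition Mat := nat -> nat -> R.

Definition vnorm (n : nat) (x : Vec) : R := maxR n (fun j => Rabs (x j)).
(* operator norm of A : (R^d, max norm) -> (R^n, max norm) = max row sum *)
Definition matnorm (n d : nat) (A : Mat) : R :=
  maxR n (fun j => sumR d (fun k => Rabs (A j k))).
Definition matvec (d : nat) (A : Mat) (x : Vec) : Vec :=
  fun j => sumR d (fun k => A j k * x k).

Definition cont01 (f : R -> R) : Prop :=
  forall t, 0 <= t <= 1 -> limit1_in f (fun x => 0 <= x <= 1) (f t) t.

Definition pow2 (p : Z) : R := powerRZ 2 p.

(* dyadic points, for p >= 0, 1 <= m <= 2^p *)
Definition t0 (p m : Z) : R := IZR (m - 1) * pow2 (- p).
Definition t1 (p m : Z) : R := IZR (2 * m - 1) * pow2 (- p - 1).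
Definition t2 (p m : Z) : R := IZR m * pow2 (- p).

Definition chi (p m : Z) (t : R) : R :=
  if Z.eqb m 0 then (if Z.eqb p 0 then 1 else 0)
  else if Rle_dec (t0 p m) t then
         (if Rlt_dec t (t1 p m) then pow2 p
          else if Rlt_dec t (t2 p m) then - pow2 p else 0)
       else 0.

(* rescaled Schauder functions: phi_{-1,0} = 1 and, for p >= 0,
   phi_pm (t) = int_0^t chi_pm, written in closed form:
   phi_00 t = t, phi_p0 = 0 (p >= 1), and the tent
   2^p * max(0, 2^{-p-1} - |t - t1|) for m >= 1. *)
Definition phi (p m : Z) (t : R) : R :=
  if Z.eqb p (-1) then 1
  else if Z.eqb m 0 then (if Z.eqb p 0 then t else 0)
  else pow2 p * Rmax 0 (pow2 (- p - 1) - Rabs (t - t1 p m)).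

Definition coef (f : R -> R) (p m : Z) : R :=
  if Z.eqb p (-1) then f 0
  else if Z.eqb m 0 then (if Z.eqb p 0 then f 1 - f 0 else 0)
  else 2 * f (t1 p m) - f (t0 p m) - f (t2 p m).

Definition Delta (p : Z) (f : R -> R) (t : R) : R :=
  let N := if Z.eqb p (-1) then 1%nat else S (2 ^ Z.to_nat p)%nat in
  sumR N (fun m => coef f p (Z.of_nat m) * phi p (Z.of_nat m) t).

Definition DeltaV (p : Z) (w : R -> Vec) : R -> Vec :=
  fun t k => Delta p (fun s => w s k) t.
Definition DeltaM (p : Z) (v : R -> Mat) : R -> Mat :=
  fun t j k => Delta p (fun s => v s j k) t.

(* Main.v *)
Require Import Defs.
From Stdlib Require Import Reals ZArith.
Open Scope R_scope.
From Stdlib Require Import Lra Lia Psatz.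


Lemma pow2_pos z : 0 < pow2 z.
Proof. unfold pow2; apply powerRZ_lt; lra. Qed.

Lemma pow2_add a b : pow2 (a + b) = pow2 a * pow2 b.
Proof. unfold pow2; apply powerRZ_add; lra. Qed.

Lemma pow2_0 : pow2 0 = 1.
Proof. reflexivity. Qed.

Lemma pow2_1 : pow2 1 = 2.
Proof. unfold pow2; simpl; ring. Qed.

Lemma IZR_pow2 e : (0 <= e)%Z -> IZR (2 ^ e) = pow2 e.
Proof.
  intro He. rewrite <- (Z2Nat.id e He). unfold pow2.
  rewrite <- pow_powerRZ, pow_IZR. reflexivity.
Qed.

Lemma pow2_succ z : pow2 (z + 1) = 2 * pow2 z.
Proof. rewrite pow2_add, pow2_1; ring. Qed.

Lemma pow2_opp z : pow2 z * pow2 (- z) = 1.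
Proof. rewrite <- pow2_add. replace (z + - z)%Z with 0%Z by lia. reflexivity. Qed.

Lemma sumR_ext N f g : (forall m, (m < N)%nat -> f m = g m) -> sumR N f = sumR N g.
Proof.
  induction N; intros H; simpl; auto.
  rewrite IHN by (intros; apply H; lia). rewrite H by lia. reflexivity.
Qed.

Lemma sumR_le N f g : (forall m, (m < N)%nat -> f m <= g m) -> sumR N f <= sumR N g.
Proof.
  induction N; intros H; simpl; [lra|].
  assert (sumR N f <= sumR N g) by (apply IHN; intros; apply H; lia).
  assert (f N <= g N) by (apply H; lia). lra.
Qed.

Lemma sumR_abs N f : Rabs (sumR N f) <= sumR N (fun m => Rabs (f m)).
Proof.
  induction N; simpl. rewrite Rabs_R0; lra.
  eapply Rle_trans. apply Rabs_triang. lra.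
Qed.

Lemma sumR_plus N f g : sumR N (fun m => f m + g m) = sumR N f + sumR N g.
Proof. induction N; simpl; [lra|]. rewrite IHN; ring. Qed.

Lemma sumR_scal N c f : sumR N (fun m => c * f m) = c * sumR N f.
Proof. induction N; simpl; [lra|]. rewrite IHN; ring. Qed.

Lemma sumR_comb N f g h : sumR N (fun m => 2 * f m - g m - h m) = 2 * sumR N f - sumR N g - sumR N h.
Proof. induction N; simpl; [lra|]. rewrite IHN; ring. Qed.

Lemma sumR_zero N f : (forall m, (m < N)%nat -> f m = 0) -> sumR N f = 0.
Proof.
  intro H. rewrite (sumR_ext N f (fun _ => 0)) by auto.
  clear H; induction N; simpl; lra.
Qed.

Lemma sumR_ge0 N f : (forall m, (m < N)%nat -> 0 <= f m) -> 0 <= sumR N f.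
Proof.
  intro H. apply Rle_trans with (sumR N (fun _ => 0)).
  clear H; induction N; simpl; lra. apply sumR_le; auto.
Qed.

Lemma sumR_shift M F : sumR (S M) F = F O + sumR M (fun m => F (S m)).
Proof. induction M; simpl in *. lra. rewrite IHM. ring. Qed.

Lemma sumR_unique N F B :
  (forall m, 0 <= F m <= B) -> 0 <= B ->
  (forall m1 m2, F m1 <> 0 -> F m2 <> 0 -> m1 = m2) -> sumR N F <= B.
Proof.
  intros H1 HB H2.
  assert (sumR N F = 0 \/ exists m, (m < N)%nat /\ F m <> 0 /\ sumR N F = F m).
  { induction N; simpl. auto.
    destruct (Req_dec (F N) 0) as [E|E].
    - rewrite E. destruct IHN as [E2|[m [Hm [Hm2 Hm3]]]]. left; lra.
      right; exists m; split; [lia|split; auto; lra].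
    - right; exists N; split; [lia|split; auto].
      destruct IHN as [E2|[m [Hm [Hm2 Hm3]]]]. lra.
      specialize (H2 _ _ Hm2 E). lia. }
  destruct H as [E|[m [_ [_ E]]]]; rewrite E; [lra| apply H1].
Qed.

Lemma maxR_ge0 N f : 0 <= maxR N f.
Proof. induction N; simpl; [lra|]. eapply Rle_trans; [apply IHN|apply Rmax_l]. Qed.

Lemma le_maxR N f j : (j < N)%nat -> f j <= maxR N f.
Proof.
  induction N; intros H; [lia|]. simpl.
  destruct (Nat.eq_dec j N). subst; apply Rmax_r.
  eapply Rle_trans; [apply IHN; lia|apply Rmax_l].
Qed.

Lemma maxR_le N f B : 0 <= B -> (forall j, (j < N)%nat -> f j <= B) -> maxR N f <= B.
Proof.
  induction N; intros HB H; simpl; auto.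
  apply Rmax_lub. apply IHN; auto. apply H; lia.
Qed.

Lemma IZR_abs_ge1 z : z <> 0%Z -> 1 <= Rabs (IZR z).
Proof. intro. rewrite <- abs_IZR. apply IZR_le. lia. Qed.

Lemma phi_tent i m t : (0 <= i)%Z -> m <> 0%Z ->
  phi i m t = pow2 i * Rmax 0 (pow2 (- i - 1) - Rabs (t - t1 i m)).
Proof.
  intros Hi Hm. unfold phi.
  replace (Z.eqb i (-1)) with false by (symmetry; apply Z.eqb_neq; lia).
  replace (Z.eqb m 0) with false by (symmetry; apply Z.eqb_neq; lia). reflexivity.
Qed.

Lemma tent_bound i m t : (0 <= i)%Z -> m <> 0%Z -> 0 <= phi i m t <= / 2.
Proof.
  intros Hi Hm. rewrite phi_tent by auto.
  pose proof (pow2_pos i). pose proof (pow2_pos (-i-1)).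
  assert (E : pow2 i * pow2 (-i-1) = /2).
  { rewrite <- pow2_add. replace (i + (-i-1))%Z with (-1)%Z by lia. unfold pow2. simpl. lra. }
  split. apply Rmult_le_pos; [lra|apply Rmax_l].
  rewrite <- E. apply Rmult_le_compat_l; [lra|].
  apply Rmax_lub; [lra|]. pose proof (Rabs_pos (t - t1 i m)); lra.
Qed.

Lemma tent_unique i m1 m2 t : (0 <= i)%Z -> m1 <> 0%Z -> m2 <> 0%Z ->
  phi i m1 t <> 0 -> phi i m2 t <> 0 -> m1 = m2.
Proof.
  intros Hi H1 H2 E1 E2. rewrite phi_tent in E1, E2 by auto.
  set (h := pow2 (-i-1)) in *. assert (Hh : 0 < h) by apply pow2_pos.
  assert (A1 : Rabs (t - t1 i m1) < h).
  { destruct (Rle_dec h (Rabs (t - t1 i m1))); [|lra].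
    exfalso; apply E1. rewrite Rmax_left by lra. ring. }
  assert (A2 : Rabs (t - t1 i m2) < h).
  { destruct (Rle_dec h (Rabs (t - t1 i m2))); [|lra].
    exfalso; apply E2. rewrite Rmax_left by lra. ring. }
  destruct (Z.eq_dec m1 m2) as [|Hne]; auto. exfalso.
  assert (B : 1 <= Rabs (IZR (2 * (m1 - m2)))) by (apply IZR_abs_ge1; lia).
  assert (C : t1 i m1 - t1 i m2 = IZR (2 * (m1 - m2)) * h).
  { unfold t1, h. rewrite <- Rmult_minus_distr_r, <- minus_IZR. f_equal. f_equal. lia. }
  assert (D : Rabs (t1 i m1 - t1 i m2) < 2 * h).
  { replace (t1 i m1 - t1 i m2) with ((t - t1 i m2) - (t - t1 i m1)) by ring.
    eapply Rle_lt_trans. apply Rabs_triang. rewrite Rabs_Ropp. lra. }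
  rewrite C, Rabs_mult, (Rabs_right h) in D by lra.
  assert (IZR 2 * h <= Rabs (IZR (2 * (m1 - m2))) * h).
  { apply Rmult_le_compat_r; [lra|]. rewrite mult_IZR, Rabs_mult.
    rewrite (Rabs_right (IZR 2)) by (apply Rle_ge, IZR_le; lia).
    assert (1 <= Rabs (IZR (m1 - m2))) by (apply IZR_abs_ge1; lia).
    assert (IZR 2 = 2) by reflexivity. nra. }
  assert (IZR 2 = 2) by reflexivity. lra.
Qed.

Lemma Delta_unfold i f t : (0 <= i)%Z ->
  Defs.Delta i f t = sumR (S (2 ^ Z.to_nat i)) (fun m => coef f i (Z.of_nat m) * phi i (Z.of_nat m) t).
Proof.
  intro Hi. unfold Defs.Delta.
  replace (Z.eqb i (-1)) with false by (symmetry; apply Z.eqb_neq; lia). reflexivity.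
Qed.

Lemma pow2_nat i : (0 <= i)%Z -> INR (2 ^ Z.to_nat i) = pow2 i.
Proof.
  intro Hi. rewrite pow_INR. unfold pow2. rewrite pow_powerRZ, Z2Nat.id by auto.
  reflexivity.
Qed.

Lemma Delta_bound i f K t : (-1 <= i)%Z -> 0 <= t <= 1 -> 0 <= K ->
  (forall m, (0 <= m)%Z -> IZR m <= pow2 i -> Rabs (coef f i m) <= K) ->
  Rabs (Defs.Delta i f t) <= 2 * K.
Proof.
  intros Hi Ht HK H.
  destruct (Z.eq_dec i (-1)) as [->|Hi'].
  { unfold Defs.Delta. simpl. unfold phi. simpl. rewrite Rplus_0_l, Rmult_1_r.
    eapply Rle_trans. apply H. lia. pose proof (pow2_pos (-1)); simpl; lra. lra. }
  rewrite Delta_unfold by lia.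
  eapply Rle_trans. apply sumR_abs.
  eapply Rle_trans. apply (sumR_le _ _ (fun m => K * Rabs (phi i (Z.of_nat m) t))).
  { intros m Hm. rewrite Rabs_mult. apply Rmult_le_compat_r. apply Rabs_pos.
    apply H. lia. rewrite <- INR_IZR_INZ, <- pow2_nat by lia. apply le_INR. lia. }
  rewrite sumR_scal. rewrite (Rmult_comm 2). apply Rmult_le_compat_l; auto.
  rewrite sumR_shift.
  assert (Rabs (phi i (Z.of_nat 0) t) <= 1).
  { unfold phi. replace (Z.eqb i (-1)) with false by (symmetry; apply Z.eqb_neq; lia).
    simpl. destruct (Z.eqb i 0); rewrite ?Rabs_R0, ?Rabs_right; lra. }
  assert (sumR (2 ^ Z.to_nat i) (fun m => Rabs (phi i (Z.of_nat (S m)) t)) <= / 2).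
  { apply sumR_unique; [|lra|].
    - intro m. pose proof (tent_bound i (Z.of_nat (S m)) t ltac:(lia) ltac:(lia)).
      rewrite Rabs_right; lra.
    - intros m1 m2 E1 E2. assert (Z.of_nat (S m1) = Z.of_nat (S m2)).
      { apply (tent_unique i _ _ t); try lia.
        intro C; apply E1; rewrite C, Rabs_R0; auto.
        intro C; apply E2; rewrite C, Rabs_R0; auto. }
      lia. }
  lra.
Qed.

Lemma pow2_half p : pow2 (- p) = 2 * pow2 (- p - 1).
Proof. rewrite <- pow2_succ. f_equal. lia. Qed.

Lemma tent_zero p m k : (0 <= p)%Z -> m <> 0%Z -> phi p m (IZR k * pow2 (- p)) = 0.
Proof.
  intros Hp Hm. rewrite phi_tent by auto. unfold t1.
  set (h := pow2 (-p-1)). assert (0 < h) by apply pow2_pos.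
  rewrite pow2_half. fold h.
  replace (IZR k * (2 * h) - IZR (2 * m - 1) * h) with (IZR (2 * k - 2 * m + 1) * h).
  2:{ rewrite plus_IZR, !minus_IZR, !mult_IZR. simpl. ring. }
  rewrite Rabs_mult, (Rabs_right h) by lra.
  assert (1 <= Rabs (IZR (2 * k - 2 * m + 1))) by (apply IZR_abs_ge1; lia).
  rewrite Rmax_left. ring. nra.
Qed.

Lemma Delta_zero0 p F : (0 <= p)%Z -> Defs.Delta p F 0 = 0.
Proof.
  intro Hp. rewrite Delta_unfold by auto. apply sumR_zero. intros m _.
  destruct (Nat.eq_dec m 0) as [->|Hm].
  - unfold phi. replace (Z.eqb p (-1)) with false by (symmetry; apply Z.eqb_neq; lia).
    simpl. destruct (Z.eqb p 0); ring.
  - pose proof (tent_zero p (Z.of_nat m) 0 Hp ltac:(lia)) as E.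
    rewrite Rmult_0_l in E. rewrite E. ring.
Qed.

Lemma Delta_zero1 p F k : (1 <= p)%Z -> Defs.Delta p F (IZR k * pow2 (- p)) = 0.
Proof.
  intro Hp. rewrite Delta_unfold by lia. apply sumR_zero. intros m _.
  destruct (Nat.eq_dec m 0) as [->|Hm].
  - unfold phi. replace (Z.eqb p (-1)) with false by (symmetry; apply Z.eqb_neq; lia).
    replace (Z.eqb p 0) with false by (symmetry; apply Z.eqb_neq; lia).
    simpl. ring.
  - rewrite tent_zero by lia. ring.
Qed.

Lemma refine_pt k a e : (0 <= e)%Z -> IZR k * pow2 (- a) = IZR (k * 2 ^ e) * pow2 (- (a + e)).
Proof.
  intro He. rewrite mult_IZR, IZR_pow2 by auto. rewrite Rmult_assoc, <- pow2_add.
  f_equal. f_equal. lia.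
Qed.

Lemma coef_zero f i m : (-1 <= i)%Z -> (i = (-1)%Z -> f 0 = 0) ->
  ((0 <= i)%Z -> forall k, f (IZR k * pow2 (- i - 1)) = 0) -> coef f i m = 0.
Proof.
  intros Hi H1 H2. unfold coef.
  destruct (Z.eqb_spec i (-1)) as [E|E]. auto.
  assert (Hi' : (0 <= i)%Z) by lia.
  assert (Z0 : f 0 = 0) by (pose proof (H2 Hi' 0%Z) as E0; rewrite Rmult_0_l in E0; exact E0).
  destruct (Z.eqb_spec m 0).
  - destruct (Z.eqb_spec i 0); [|ring]. subst i.
    replace 1 with (IZR 2 * pow2 (-0-1)) by (unfold pow2; simpl; field).
    rewrite H2, Z0 by lia; ring.
  - unfold t0, t1, t2.
    replace (IZR (m - 1) * pow2 (- i)) with (IZR (2 * (m - 1)) * pow2 (- i - 1))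
      by (rewrite pow2_half, mult_IZR; simpl; ring).
    replace (IZR m * pow2 (- i)) with (IZR (2 * m) * pow2 (- i - 1))
      by (rewrite pow2_half, mult_IZR; simpl; ring).
    rewrite !H2 by auto. ring.
Qed.

Lemma Delta_zero i f t : (forall m, coef f i m = 0) -> Defs.Delta i f t = 0.
Proof.
  intro H. unfold Defs.Delta. apply sumR_zero. intros m _. rewrite H. ring.
Qed.

Definition aff (f : R -> R) (a b : R) := exists A B, forall s, a <= s <= b -> f s = A * s + B.

Lemma aff_sumR N F a b : (forall m, (m < N)%nat -> aff (F m) a b) ->
  aff (fun s => sumR N (fun m => F m s)) a b.
Proof.
  induction N; intro H. exists 0, 0. intros; simpl; ring.
  destruct IHN as [A [B HAB]]. intros; apply H; lia.
  destruct (H N ltac:(lia)) as [A' [B' HAB']].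
  exists (A + A'), (B + B'). intros s Hs. simpl. rewrite HAB, HAB' by auto. ring.
Qed.

Lemma aff_scal c f a b : aff f a b -> aff (fun s => c * f s) a b.
Proof. intros [A [B H]]. exists (c * A), (c * B). intros s Hs. rewrite H by auto. ring. Qed.

Lemma phi_aff p m k : (-1 <= p)%Z ->
  aff (phi p m) (IZR k * pow2 (- p - 1)) (IZR (k + 1) * pow2 (- p - 1)).
Proof.
  intro Hp. unfold phi.
  destruct (Z.eqb_spec p (-1)). exists 0, 1; intros; ring.
  destruct (Z.eqb_spec m 0).
  { destruct (Z.eqb p 0). exists 1, 0; intros; ring. exists 0, 0; intros; ring. }
  unfold t1. set (h := pow2 (-p-1)). assert (0 < h) by apply pow2_pos.
  set (u := IZR (2 * m - 1)). rewrite plus_IZR. set (x := IZR k).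
  assert (Ez : IZR (k - (2 * m - 1)) = x - u) by (unfold x, u; apply minus_IZR).
  assert (Hc : x - u <= -2 \/ x - u = -1 \/ x - u = 0 \/ 1 <= x - u).
  { rewrite <- Ez. destruct (Z_lt_le_dec (k - (2*m-1)) (-1)) as [C|C].
    left; apply IZR_le; lia.
    destruct (Z.eq_dec (k - (2*m-1)) (-1)) as [C2|C2]. right; left; rewrite C2; reflexivity.
    destruct (Z.eq_dec (k - (2*m-1)) 0) as [C3|C3]. right; right; left; rewrite C3; reflexivity.
    right; right; right; apply IZR_le; lia. }
  destruct Hc as [C|[C|[C|C]]].
  - exists 0, 0. intros s Hs. rewrite Rmax_left. ring.
    assert (s <= u * h - h) by nra.
    rewrite Rabs_left by lra. lra.
  - exists (pow2 p), (pow2 p * (h - u * h)). intros s Hs.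
    assert (s <= u * h) by nra. assert (u * h - h <= s) by nra.
    destruct (Req_dec s (u*h)) as [E|E].
    + rewrite E, Rminus_diag, Rabs_R0, Rmax_right by lra. ring.
    + rewrite Rabs_left by lra. rewrite Rmax_right by lra. ring.
  - exists (- pow2 p), (pow2 p * (h + u * h)). intros s Hs.
    assert (u * h <= s) by nra. assert (s <= u * h + h) by nra.
    rewrite Rabs_right by lra. rewrite Rmax_right by lra. ring.
  - exists 0, 0. intros s Hs. rewrite Rmax_left. ring.
    assert (u * h + h <= s) by nra.
    rewrite Rabs_right by lra. lra.
Qed.

Lemma Delta_aff p F k : (-1 <= p)%Z ->
  aff (Defs.Delta p F) (IZR k * pow2 (- p - 1)) (IZR (k + 1) * pow2 (- p - 1)).
Proof.
  intro Hp. unfold Defs.Delta. cbv zeta.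
  apply (aff_sumR _ (fun m s => coef F p (Z.of_nat m) * phi p (Z.of_nat m) s)).
  intros m _. apply aff_scal. apply phi_aff; auto.
Qed.

Lemma find_k p i m : (-1 <= p)%Z -> (p + 1 <= i)%Z -> (1 <= m)%Z -> (m <= 2 ^ i)%Z ->
  exists k, 0 <= IZR k * pow2 (- p - 1) /\ IZR k * pow2 (- p - 1) <= t0 i m /\
    t2 i m <= IZR (k + 1) * pow2 (- p - 1) /\ IZR (k + 1) * pow2 (- p - 1) <= 1.
Proof.
  intros Hp Hpi Hm1 Hm2.
  set (N := (2 ^ (i - p - 1))%Z).
  assert (HN : (0 < N)%Z) by (apply Z.pow_pos_nonneg; lia).
  set (k := ((m - 1) / N)%Z).
  assert (Hk0 : (0 <= k)%Z) by (apply Z.div_pos; lia).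
  pose proof (Z.div_mod (m - 1) N ltac:(lia)) as Hdm.
  pose proof (Z.mod_pos_bound (m - 1) N HN) as Hmod. fold k in Hdm.
  set (r := ((m - 1) mod N)%Z) in *. clearbody r k.
  assert (E2 : (2 ^ i = 2 ^ (p + 1) * N)%Z).
  { unfold N. rewrite <- Z.pow_add_r by lia. f_equal; lia. }
  set (P := (2 ^ (p + 1))%Z) in *.
  assert (Hk1 : (k + 1 <= P)%Z).
  { assert (X1 : (N * k <= m - 1)%Z) by lia. assert (X2 : (m <= P * N)%Z) by lia.
    destruct (Z_le_gt_dec (k+1) P) as [|X3]; auto.
    assert (N * P <= N * k)%Z by (apply Z.mul_le_mono_nonneg_l; lia). lia. }
  assert (EH : forall z, IZR z * pow2 (- p - 1) = IZR (z * N) * pow2 (- i)).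
  { intro z. rewrite mult_IZR. unfold N. rewrite IZR_pow2 by lia.
    rewrite Rmult_assoc, <- pow2_add. f_equal. f_equal. lia. }
  assert (Hpi0 : 0 < pow2 (- i)) by apply pow2_pos.
  exists k. unfold t0, t2. rewrite !EH. repeat split.
  - apply Rmult_le_pos; [apply IZR_le; nia | lra].
  - apply Rmult_le_compat_r; [lra|]. apply IZR_le. nia.
  - apply Rmult_le_compat_r; [lra|]. apply IZR_le. nia.
  - rewrite <- (pow2_opp i). rewrite <- (IZR_pow2 i) by lia.
    apply Rmult_le_compat_r; [lra|]. apply IZR_le. nia.
Qed.

Lemma prod2 d (V W : nat -> R -> R) a c al be al' be' Mv Mw :
  al < be -> al' < be' -> al <= a -> a <= c -> c <= be -> al' <= a -> c <= be' -> 0 <= Mw ->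
  (forall k, (k < d)%nat -> aff (V k) al be) -> (forall k, (k < d)%nat -> aff (W k) al' be') ->
  sumR d (fun k => Rabs (V k al)) <= Mv -> sumR d (fun k => Rabs (V k be)) <= Mv ->
  (forall k, (k < d)%nat -> Rabs (W k al') <= Mw) -> (forall k, (k < d)%nat -> Rabs (W k be') <= Mw) ->
  Rabs (2 * sumR d (fun k => V k ((a + c) / 2) * W k ((a + c) / 2))
        - sumR d (fun k => V k a * W k a) - sumR d (fun k => V k c * W k c))
   <= 2 * Mv * Mw * ((c - a) * (c - a)) / ((be - al) * (be' - al')).
Proof.
  intros H1 H2 H3 H4 H5 H6 H7 HMw HV HW SV1 SV2 BW1 BW2.
  set (K := Mw * ((c - a) * (c - a)) / ((be - al) * (be' - al'))).
  assert (HK : 0 <= K).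
  { unfold K. apply Rmult_le_pos. apply Rmult_le_pos; nra.
    apply Rlt_le, Rinv_0_lt_compat. nra. }
  rewrite <- sumR_comb. eapply Rle_trans. apply sumR_abs.
  eapply Rle_trans.
  apply (sumR_le _ _ (fun k => K * (Rabs (V k al) + Rabs (V k be)))).
  { intros k Hk. destruct (HV k Hk) as [A [B HAB]]. destruct (HW k Hk) as [A' [B' HAB']].
    rewrite (HAB a), (HAB c), (HAB ((a+c)/2)), (HAB' a), (HAB' c), (HAB' ((a+c)/2)) by lra.
    replace (2 * ((A * ((a + c) / 2) + B) * (A' * ((a + c) / 2) + B')) -
      (A * a + B) * (A' * a + B') - (A * c + B) * (A' * c + B'))
      with (- (A * A') * ((c - a) * (c - a)) / 2) by field.
    assert (EA : A * (be - al) = V k be - V k al) by (rewrite (HAB be), (HAB al) by lra; ring).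
    assert (EA' : A' * (be' - al') = W k be' - W k al') by (rewrite (HAB' be'), (HAB' al') by lra; ring).
    assert (BA : Rabs A * (be - al) <= Rabs (V k al) + Rabs (V k be)).
    { rewrite <- (Rabs_right (be - al)) by lra. rewrite <- Rabs_mult, EA.
      unfold Rminus. eapply Rle_trans. apply Rabs_triang. rewrite Rabs_Ropp. lra. }
    assert (BA' : Rabs A' * (be' - al') <= 2 * Mw).
    { rewrite <- (Rabs_right (be' - al')) by lra. rewrite <- Rabs_mult, EA'.
      unfold Rminus. eapply Rle_trans. apply Rabs_triang. rewrite Rabs_Ropp.
      pose proof (BW1 k Hk); pose proof (BW2 k Hk); lra. }
    unfold K.
    set (D := (be - al) * (be' - al')).
    assert (HD : 0 < D) by (unfold D; nra).
    set (S2 := (c - a) * (c - a)). assert (0 <= S2) by (unfold S2; nra).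
    assert (HH : Rabs (- (A * A') * S2 / 2) = Rabs A * Rabs A' * S2 / 2).
    { unfold Rdiv. rewrite !Rabs_mult, Rabs_Ropp, Rabs_mult, (Rabs_right S2), (Rabs_right (/2)) by lra.
      ring. }
    rewrite HH.
    apply (Rmult_le_reg_r D); auto.
    replace (Mw * S2 / D * (Rabs (V k al) + Rabs (V k be)) * D)
      with (Mw * S2 * (Rabs (V k al) + Rabs (V k be))) by (field; lra).
    replace (Rabs A * Rabs A' * S2 / 2 * D) with ((Rabs A * (be - al)) * (Rabs A' * (be' - al')) * S2 / 2)
      by (unfold D; field).
    pose proof (Rabs_pos A). pose proof (Rabs_pos A').
    assert (0 <= Rabs A * (be - al)) by nra. assert (0 <= Rabs A' * (be' - al')) by nra.
    assert ((Rabs A * (be - al)) * (Rabs A' * (be' - al')) <= (Rabs (V k al) + Rabs (V k be)) * (2 * Mw)).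
    { apply Rmult_le_compat; auto. }
    nra. }
  rewrite sumR_scal, sumR_plus.
  replace (2 * Mv * Mw * ((c - a) * (c - a)) / ((be - al) * (be' - al'))) with (K * (2 * Mv))
    by (unfold K; field; nra).
  apply Rmult_le_compat_l; auto. lra.
Qed.

Lemma Delta_m1 F s : Defs.Delta (-1) F s = F 0.
Proof. unfold Defs.Delta, phi, coef. simpl. ring. Qed.

Lemma pts_in i m : (0 <= i)%Z -> (1 <= m)%Z -> IZR m <= pow2 i ->
  0 <= t0 i m /\ t0 i m <= t1 i m /\ t1 i m <= t2 i m /\ t2 i m <= 1 /\
  t1 i m = (t0 i m + t2 i m) / 2 /\ t2 i m - t0 i m = pow2 (- i).
Proof.
  intros Hi Hm1 Hm2. unfold t0, t1, t2.
  pose proof (pow2_pos (-i)). pose proof (pow2_half i).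
  set (h := pow2 (- i - 1)) in *.
  assert (1 <= IZR m) by (apply IZR_le; lia).
  rewrite !minus_IZR, mult_IZR. simpl.
  assert (IZR m * pow2 (-i) <= 1).
  { rewrite <- (pow2_opp i). apply Rmult_le_compat_r; lra. }
  repeat split; nra.
Qed.

Lemma coef_triv f i m K : (-1 <= i)%Z -> (0 <= m)%Z -> IZR m <= pow2 i ->
  (forall s, 0 <= s <= 1 -> Rabs (f s) <= K) -> Rabs (coef f i m) <= 4 * K.
Proof.
  intros Hi Hm0 Hm H.
  assert (HK : 0 <= K) by (eapply Rle_trans; [apply Rabs_pos| apply (H 0); lra]).
  unfold coef. destruct (Z.eqb_spec i (-1)). pose proof (H 0 ltac:(lra)); lra.
  destruct (Z.eqb_spec m 0).
  - destruct (Z.eqb i 0). 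
    + unfold Rminus. eapply Rle_trans. apply Rabs_triang. rewrite Rabs_Ropp.
      pose proof (H 0 ltac:(lra)); pose proof (H 1 ltac:(lra)); lra.
    + rewrite Rabs_R0; lra.
  - destruct (pts_in i m ltac:(lia) ltac:(lia) Hm) as [A1 [A2 [A3 [A4 _]]]].
    pose proof (H (t0 i m) ltac:(lra)). pose proof (H (t1 i m) ltac:(lra)).
    pose proof (H (t2 i m) ltac:(lra)).
    unfold Rminus. eapply Rle_trans. apply Rabs_triang. rewrite Rabs_Ropp.
    eapply Rle_trans. apply Rplus_le_compat_r. apply Rabs_triang. rewrite Rabs_Ropp, Rabs_mult.
    rewrite (Rabs_right 2) by lra. lra.
Qed.

Theorem mainTheorem6 :
  forall d n : nat, exists C : R, 0 < C /\
  forall (i p q : Z) (v : R -> Mat) (w : R -> Vec),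
    (-1 <= i)%Z -> (-1 <= p)%Z -> (-1 <= q)%Z ->
    (forall j k, (j < n)%nat -> (k < d)%nat -> cont01 (fun s => v s j k)) ->
    (forall k, (k < d)%nat -> cont01 (fun s => w s k)) ->
    forall Mv Mw : R,
    (forall t, 0 <= t <= 1 -> matnorm n d (DeltaM p v t) <= Mv) ->
    (forall t, 0 <= t <= 1 -> vnorm d (DeltaV q w t) <= Mw) ->
    let g : R -> Vec := fun s => matvec d (DeltaM p v s) (DeltaV q w s) in
    forall t, 0 <= t <= 1 ->
      ((Z.max p q <= i)%Z ->
       ~ ((i = q /\ (q > p)%Z) \/ (i = p /\ (p > q)%Z)) ->
       vnorm n (DeltaV i g t)
         <= C * pow2 (- Z.max i (Z.max p q) - i + p + q) * Mv * Mw)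
   /\ (((i = q /\ (q > p)%Z) \/ (i = p /\ (p > q)%Z)) ->
       vnorm n (DeltaV i g t) <= C * Mv * Mw)
   /\ (((p > i)%Z \/ (q > i)%Z) ->
       forall j, (j < n)%nat -> DeltaV i g t j = 0).
Proof.
  intros d n. exists 16. split; [lra|].
  intros i p q v w Hi Hp Hq _ _ Mv Mw HMv HMw g t Ht.
  assert (HMv0 : 0 <= Mv) by (eapply Rle_trans; [apply maxR_ge0|apply (HMv t Ht)]).
  assert (HMw0 : 0 <= Mw) by (eapply Rle_trans; [apply maxR_ge0|apply (HMw t Ht)]).
  assert (Row : forall s j, 0 <= s <= 1 -> (j < n)%nat ->
            sumR d (fun k => Rabs (DeltaM p v s j k)) <= Mv).
  { intros s j Hs Hj. eapply Rle_trans; [|apply (HMv s Hs)].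
    apply (le_maxR n (fun j => sumR d (fun k => Rabs (DeltaM p v s j k)))). auto. }
  assert (Wb : forall s k, 0 <= s <= 1 -> (k < d)%nat -> Rabs (DeltaV q w s k) <= Mw).
  { intros s k Hs Hk. eapply Rle_trans; [|apply (HMw s Hs)].
    apply (le_maxR d (fun k => Rabs (DeltaV q w s k))). auto. }
  assert (gb : forall s j, 0 <= s <= 1 -> (j < n)%nat -> Rabs (g s j) <= Mv * Mw).
  { intros s j Hs Hj. unfold g, matvec. eapply Rle_trans. apply sumR_abs.
    eapply Rle_trans. apply (sumR_le _ _ (fun k => Mw * Rabs (DeltaM p v s j k))).
    { intros k Hk. rewrite Rabs_mult, Rmult_comm. apply Rmult_le_compat_r. apply Rabs_pos. auto. }
    rewrite sumR_scal. rewrite Rmult_comm. apply Rmult_le_compat_r; auto. }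
  assert (Triv : forall j, (j < n)%nat -> Rabs (DeltaV i g t j) <= 8 * (Mv * Mw)).
  { intros j Hj. unfold DeltaV. replace (8 * (Mv * Mw)) with (2 * (4 * (Mv * Mw))) by ring.
    apply Delta_bound; [auto|auto|nra|]. intros m Hm0 Hm. apply coef_triv; auto.
    }
  assert (VN : forall B, 0 <= B -> (forall j, (j < n)%nat -> Rabs (DeltaV i g t j) <= B) ->
            vnorm n (DeltaV i g t) <= B).
  { intros B HB H. unfold vnorm. apply maxR_le; auto. }
  split; [|split].
  - intros Hmax Hexc.
    destruct (Z_le_gt_dec (p + 1) i) as [Hpi|Hpi];
    [destruct (Z_le_gt_dec (q + 1) i) as [Hqi|Hqi]|].
    2,3: (replace (- Z.max i (Z.max p q) - i + p + q)%Z with 0%Z by lia;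
          rewrite pow2_0; apply VN; [nra|]; intros j Hj;
          eapply Rle_trans; [apply Triv; auto|nra]).
    replace (- Z.max i (Z.max p q) - i + p + q)%Z with (- 2 * i + p + q)%Z by lia.
    set (e := pow2 (- 2 * i + p + q)). assert (He : 0 < e) by apply pow2_pos.
    apply VN; [repeat apply Rmult_le_pos; lra|]. intros j Hj.
    replace (16 * e * Mv * Mw) with (2 * (8 * Mv * Mw * e)) by ring.
    unfold DeltaV. apply Delta_bound; [auto|auto|repeat apply Rmult_le_pos; lra|].
    intros m Hm0 Hm.
    destruct (Z.eq_dec m 0) as [->|Hm1].
    { unfold coef. replace (Z.eqb i (-1)) with false by (symmetry; apply Z.eqb_neq; lia).
      simpl. destruct (Z.eqb_spec i 0); [|rewrite Rabs_R0; repeat apply Rmult_le_pos; lra].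
      assert (p = (-1)%Z) by lia. assert (q = (-1)%Z) by lia. subst p q.
      assert (E : g 1 j = g 0 j).
      { unfold g, matvec, DeltaM, DeltaV, Defs.Delta, phi. simpl. reflexivity. }
      rewrite E, Rminus_diag, Rabs_R0. repeat apply Rmult_le_pos; lra. }
    assert (Hi0 : (0 <= i)%Z) by lia.
    destruct (pts_in i m Hi0 ltac:(lia) Hm) as [A1 [A2 [A3 [A4 [A5 A6]]]]].
    assert (Hmi : (m <= 2 ^ i)%Z) by (apply le_IZR; rewrite IZR_pow2 by lia; auto).
    destruct (find_k p i m Hp Hpi ltac:(lia) Hmi) as [k1 [B1 [B2 [B3 B4]]]].
    destruct (find_k q i m Hq Hqi ltac:(lia) Hmi) as [k2 [C1 [C2 [C3 C4]]]].
    unfold coef. replace (Z.eqb i (-1)) with false by (symmetry; apply Z.eqb_neq; lia).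
    replace (Z.eqb m 0) with false by (symmetry; apply Z.eqb_neq; lia).
    rewrite A5.
    set (H1 := pow2 (- p - 1)) in *. set (H2 := pow2 (- q - 1)) in *.
    assert (P1 : 0 < H1) by apply pow2_pos. assert (P2 : 0 < H2) by apply pow2_pos.
    assert (D1 : IZR (k1 + 1) * H1 - IZR k1 * H1 = H1) by (rewrite plus_IZR; ring).
    assert (D2 : IZR (k2 + 1) * H2 - IZR k2 * H2 = H2) by (rewrite plus_IZR; ring).
    eapply Rle_trans.
    { apply (prod2 d (fun k s => DeltaM p v s j k) (fun k s => DeltaV q w s k)
        (t0 i m) (t2 i m) (IZR k1 * H1) (IZR (k1 + 1) * H1) (IZR k2 * H2) (IZR (k2 + 1) * H2) Mv Mw);
        try lra.
      - intros k Hk. unfold DeltaM. apply Delta_aff; auto.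
      - intros k Hk. unfold DeltaV. apply Delta_aff; auto.
      - apply Row; auto; lra.
      - apply Row; auto; lra.
      - intros k Hk. apply Wb; auto; lra.
      - intros k Hk. apply Wb; auto; lra. }
    rewrite D1, D2, A6.
    assert (EE : pow2 (- i) * pow2 (- i) = 4 * e * H1 * H2).
    { unfold e, H1, H2. replace 4 with (pow2 2) by (unfold pow2; simpl; ring).
      rewrite <- !pow2_add. f_equal. lia. }
    rewrite EE. right. field. lra.
  - intros _. apply VN; [nra|]. intros j Hj. eapply Rle_trans; [apply Triv; auto|nra].
  - intros Hgt j Hj. unfold DeltaV. apply Delta_zero. intro m.
    apply coef_zero; auto.
    + intros ->. unfold g, matvec. apply sumR_zero. intros k Hk.
      destruct Hgt as [Hgt|Hgt].
      * unfold DeltaM. rewrite Delta_zero0 by lia. ring.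
      * unfold DeltaV. rewrite Delta_zero0 by lia. ring.
    + intros Hi0 k. replace (- i - 1)%Z with (- (i + 1))%Z by lia. unfold g, matvec. apply sumR_zero. intros k' Hk'.
      destruct Hgt as [Hgt|Hgt].
      * unfold DeltaM. rewrite (refine_pt k (i + 1) (p - i - 1)) by lia.
        replace (- (i + 1 + (p - i - 1)))%Z with (- p)%Z by lia.
        rewrite Delta_zero1 by lia. ring.
      * unfold DeltaV. rewrite (refine_pt k (i + 1) (q - i - 1)) by lia.
        replace (- (i + 1 + (q - i - 1)))%Z with (- q)%Z by lia.
        rewrite Delta_zero1 by lia. ring.
Qed.
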